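(* Let $\widetilde L$ be a standardized Laplacian matrix of order $n$, $P=\widetilde L+J$, $\widetilde L_c=K-\widetilde L$. Let $d$ be the in-forest dimension of the digraph $\Gamma$ of $\widetilde L$ and $d_c$ the in-forest dimension of the complementary digraph $\Gamma_c$. For a matrix $A$ let $m_A(\lambda)$ be the algebraic multiplicity of $\lambda$ as an eigenvalue of $A$ (zero if $\lambda\notin\operatorname{sp}A$) and $V_A(\lambda)$ the eigenspace of $A$ for $\lambda$. Then: (i) $m_{\widetilde L}(0)=d$, $m_{\widetilde L}(1)=d_c-1$; (ii) $m_P(0)=d-1$, $m_P(1)=d_c$; (iii) $m_{\widetilde L_c}(1)=d-1$, $m_{\widetilde L_c}(0)=d_c$; and each of these eigenvalues (whenever its multiplicity is positive) is semisimple; (iv) if $v\in V_{\widetilde L}(0)$ and $Kv\ne0$, then $Kv\in V_P(0)=V_{\widetilde L_c}(1)$; if $x\in V_P(1)=V_{\widetilde L_c}(0)$ and $Kx\ne0$, then $Kx\in V_{\widetilde L}(1)$.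
   Context: A standardized Laplacian matrix of order $n$ is a real $n\times n$ matrix whose row sums are all $0$ and whose off-diagonal entries are nonpositive with absolute value at most $1/n$. $J$ is the $n\times n$ matrix with all entries $1/n$, and $K=I-J$. The digraph $\Gamma$ of $\widetilde L=[\widetilde l_{ij}]$ has vertex set $\{1,\dots,n\}$ and an arc $i\to j$ ($j\ne i$) iff $\widetilde l_{ij}\ne0$; the complementary digraph $\Gamma_c$ has an arc $i\to j$ ($j\ne i$) iff $\widetilde l_{ij}\ne-1/n$ (it is the digraph of $\widetilde L_c$). A converging tree is a rooted directed tree containing a directed path from every vertex to the root; an in-forest of a digraph is a spanning subgraph whose weak components are converging trees; the in-forest dimension is the minimum number of trees in an in-forest. *)

(* Defs.v *)
From HB Require Import structures.
From mathcomp Require Import all_boot all_order all_algebra.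
Set Implicit Arguments. Unset Strict Implicit. Unset Printing Implicit Defensive.
Import Order.TTheory GRing.Theory Num.Theory.
Local Open Scope ring_scope.

Section Defs.
Variable R : realFieldType.
Variable n : nat.

Definition std_laplacian (L : 'M[R]_n) : Prop :=
  (forall i : 'I_n, \sum_(j < n) L i j = 0) /\
  (forall i j : 'I_n, i != j -> L i j <= 0 /\ - L i j <= (n%:R)^-1).

Definition Jmx : 'M[R]_n := const_mx (n%:R)^-1.
Definition Kmx : 'M[R]_n := 1%:M - Jmx.

Definition digraph_of (L : 'M[R]_n) : rel 'I_n := fun i j => (i != j) && (L i j != 0).
Definition cdigraph_of (L : 'M[R]_n) : rel 'I_n :=
  fun i j => (i != j) && (L i j != - (n%:R)^-1).

Definition alg_mult (A : 'M[R]_n) (a : R) : nat := mup a (char_poly A).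

(* eigenspace of A for a (column eigenvectors A v = a v), stored as the
   row space of transposed eigenvectors: rows w with w *m (A - a)^T = 0 *)
Definition col_eigenspace (A : 'M[R]_n) (a : R) := kermx (A - a%:M)^T.
Definition geom_mult (A : 'M[R]_n) (a : R) : nat := \rank (col_eigenspace A a).

Definition in_eigsp (A : 'M[R]_n) (a : R) (v : 'cV[R]_n) : bool := A *m v == a *: v.
End Defs.

Section Forest.
Variable n : nat.
Implicit Types (e : rel 'I_n) (F : {set 'I_n * 'I_n}).

Definition arcrel F : rel 'I_n := fun i j => (i, j) \in F.
Definition weakrel F : rel 'I_n := fun i j => ((i, j) \in F) || ((j, i) \in F).
Definition wcomp F (x : 'I_n) : {set 'I_n} := [set y | connect (weakrel F) x y].

(* C (a weak component of F) is a converging tree: a rooted directed tree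
   (connected, #arcs = #vertices - 1, i.e. underlying graph a tree) with a
   root r to which every vertex of C has a directed path. *)
Definition converging_tree F (C : {set 'I_n}) : bool :=
  [exists r in C, [forall y in C, connect (arcrel F) y r]] &&
  (#|[set a in F | (a.1 \in C) && (a.2 \in C)]| == #|C| - 1)%N.

Definition in_forest e F : bool :=
  [forall a in F, e a.1 a.2] && [forall x, converging_tree F (wcomp F x)].

Definition ntrees F : nat := #|[set wcomp F x | x : 'I_n]|.

(* in-forest dimension: minimum number of trees in an in-forest
   (the empty arc set is an in-forest with n trees, so n is a valid bound) *)
Definition inforest_dim e : nat := \big[minn/n]_(F | in_forest e F) ntrees F.
End Forest.

(* Main.v *)
Require Import Defs.
From HB Require Import structures.
From mathcomp Require Import all_boot all_order all_algebra.
From Stdlib Require Import FunctionalExtensionality.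
Import Order.TTheory GRing.Theory Num.Theory.
Set Implicit Arguments. Unset Strict Implicit. Unset Printing Implicit Defensive.


Lemma connect_inv (T' : finType) (U : eqType) (e : rel T') (g : T' -> U) :
  (forall a b, e a b -> g a = g b) -> forall x y, connect e x y -> g x = g y.
Proof.
move=> H x y /connectP [p]; elim: p x => [|a p IH] x /=; first by move=> _ ->.
by move=> /andP [exa pa] ly; rewrite (H _ _ exa); exact: IH.
Qed.

Lemma bigmin_le (I : eqType) (s : seq I) (P : pred I) (g : I -> nat) i0 x :
  x \in s -> P x -> (\big[minn/i0]_(y <- s | P y) g y <= g x)%N.
Proof.
elim: s => //= y s IH; rewrite inE big_cons => /orP [/eqP <-|xs] Px.
  by rewrite Px geq_minl.
by case: ifP => _; [rewrite geq_min IH ?orbT| exact: IH].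
Qed.

Lemma bigmin_att (I : eqType) (s : seq I) (P : pred I) (g : I -> nat) i0 :
  \big[minn/i0]_(y <- s | P y) g y = i0 \/
  exists2 x, P x & \big[minn/i0]_(y <- s | P y) g y = g x.
Proof.
elim/big_rec: _ => [|i v Pi [->|[x Px ->]]]; first by left.
  by rewrite /minn; case: ifP => _; [right; exists i | left].
by rewrite /minn; case: ifP => _; right; [exists i | exists x].
Qed.

Section Graph.
Variable n : nat.
Implicit Types (e : rel 'I_n) (F : {set 'I_n * 'I_n}) (T : {set 'I_n}).

Definition reach e T := forall x, exists2 t, t \in T & connect e x t.

Lemma weakrel_sym F : symmetric (weakrel F).
Proof. by move=> a b; rewrite /weakrel orbC. Qed.

Lemma wcomp_eq F x y : y \in wcomp F x -> wcomp F y = wcomp F x.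
Proof.
have sw := sym_connect_sym (weakrel_sym F).
rewrite inE => Hxy; apply/setP => z; rewrite !inE; apply/idP/idP => H.
  exact: connect_trans Hxy H.
by rewrite sw in Hxy; exact: connect_trans Hxy H.
Qed.

Lemma arc_sub e F : in_forest e F -> forall a b, arcrel F a b -> e a b.
Proof. by case/andP=> /forall_inP H _ a b Hab; exact: (H (a, b) Hab). Qed.

Lemma forest_reach e F : in_forest e F -> exists T, reach e T /\ (#|T| <= ntrees F)%N.
Proof.
move=> HF; have Hsub := arc_sub HF; case/andP: HF => _ /forallP Htree.
pose h (C : {set 'I_n}) := [pick r in C | [forall y in C, connect (arcrel F) y r]].
have hS x : exists2 r, h (wcomp F x) = Some r &
    (r \in wcomp F x) && [forall y in wcomp F x, connect (arcrel F) y r].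
  rewrite /h; case: pickP => [r Hr|H0]; first by exists r.
  exfalso; have := Htree x; case/andP => /existsP [r /andP [Hr1 Hr2]] _.
  by have := H0 r; rewrite Hr1 Hr2.
pose T := [set r | [exists x, h (wcomp F x) == Some r]].
exists T; split.
  move=> x; have [r hr /andP [rin /forall_inP Hall]] := hS x.
  exists r; first by rewrite inE; apply/existsP; exists x; rewrite hr.
  apply: (connect_sub _ (Hall x _)); last by rewrite inE connect0.
  by move=> a b /Hsub; exact: connect1.
have -> : #|T| = #|[set wcomp F r | r in T]|.
  apply/esym/card_in_imset => r r'; rewrite !inE => /existsP [x /eqP hx]
     /existsP [x' /eqP hx'] Heq.
  have [r0 hr0 /andP [r0in _]] := hS x; have [r1 hr1 /andP [r1in _]] := hS x'.
  have e0 : r0 = r by move: hr0; rewrite hx => -[].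
  have e1 : r1 = r' by move: hr1; rewrite hx' => -[].
  subst r0 r1.
  have Ex : wcomp F x = wcomp F x' by rewrite -(wcomp_eq r0in) -(wcomp_eq r1in).
  by move: hx hx'; rewrite Ex => -> [].
apply: subset_leq_card; apply/subsetP => C /imsetP [r _ ->].
by apply/imsetP; exists r.
Qed.

Lemma reach_forest e T : reach e T -> exists F, in_forest e F /\ ntrees F = #|T|.
Proof.
move=> HT.
pose step (S : {set 'I_n}) := S :|: [set x | [exists y in S, e x y]].
pose Rk k := iter k step T.
have Hex x : exists k, x \in Rk k.
  have [t tT /connectP [p pp lt]] := HT x.
  exists (size p); elim: p x pp lt => [|y p IH] x /=; first by move=> _ <-.
  move=> /andP [exy py] lt; have := IH y py lt.
  move=> H; change (x \in step (Rk (size p))); rewrite inE; apply/orP; right; rewrite inE.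
  by apply/existsP; exists y; rewrite H exy.
pose dist x := ex_minn (Hex x).
have distP x : x \in Rk (dist x) by rewrite /dist; case: ex_minnP.
have distM x k : x \in Rk k -> (dist x <= k)%N.
  by rewrite /dist; case: ex_minnP => m _ H /H.
have dist0 x : (dist x == 0%N) = (x \in T).
  apply/idP/idP => [/eqP d0|xT]; first by have := distP x; rewrite d0.
  by rewrite -leqn0; apply: distM.
have Hnext x : x \notin T -> exists y, e x y && (dist y < dist x)%N.
  move=> xT; have := distP x; case Edx : (dist x) => [|k].
    by move/eqP: Edx; rewrite dist0 (negbTE xT).
  rewrite /Rk iterS inE => /orP [H|].
    by have := distM _ _ H; rewrite Edx ltnn.
  rewrite inE => /existsP [y /andP [yk exy]]; exists y; rewrite exy /=.
  by have := distM _ _ yk; rewrite ltnS.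
pose nxt x := odflt x [pick y | e x y && (dist y < dist x)%N].
have nxtP x : x \notin T -> e x (nxt x) && (dist (nxt x) < dist x)%N.
  move=> xT; rewrite /nxt; case: pickP => [y //|H0].
  by have [y Hy] := Hnext x xT; rewrite H0 in Hy.
pose f x := if x \in T then x else nxt x.
have fT x : x \in T -> f x = x by rewrite /f => ->.
have fd x : (dist (f x) <= dist x)%N.
  rewrite /f; case: ifP => // xT; have /andP [_ ] := nxtP x (negbT xT).
  exact: ltnW.
have iterT k x : (dist x <= k)%N -> iter k f x \in T.
  elim: k x => [|k IH] x; first by rewrite leqn0 -dist0.
  move=> Hd; rewrite iterSr; apply: IH.
  case: (boolP (x \in T)) => xT.
    by rewrite fT //; move: xT; rewrite -dist0 => /eqP ->.
  rewrite /f (negbTE xT); have /andP [_ lt] := nxtP x xT.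
  by rewrite -ltnS (leq_trans lt Hd).
have iterFix k x : x \in T -> iter k f x = x.
  by elim: k => [//|k IH] xT /=; rewrite IH // fT.
pose root x := iter (dist x) f x.
have rootT x : root x \in T := iterT _ _ (leqnn _).
have iter_root k x : (dist x <= k)%N -> iter k f x = root x.
  by move=> Hk; rewrite -(subnK Hk) iterD iterFix //; exact: rootT.
have root_f x : root (f x) = root x.
  rewrite -(iter_root (dist x) (f x) (fd x)) -iterSr.
  by apply: iter_root; exact: leqnSn.
have rootTid t : t \in T -> root t = t by move=> tT; rewrite /root iterFix.
pose F := [set (x, nxt x) | x in ~: T].
have FP a b : arcrel F a b -> (a \notin T) && (b == f a).
  rewrite /arcrel => /imsetP [x]; rewrite inE => xT [-> ->].
  by rewrite xT /f (negbTE xT) eqxx.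
have Fnx x : x \notin T -> arcrel F x (f x).
  by move=> xT; rewrite /arcrel /f (negbTE xT); apply/imsetP; exists x; rewrite ?inE.
have conn_iter k x : connect (arcrel F) x (iter k f x).
  elim: k => [|k IH]; first exact: connect0.
  rewrite iterS; apply: (connect_trans IH); set y := iter k f x.
  case: (boolP (y \in T)) => yT; first by rewrite fT.
  exact/connect1/Fnx.
have conn_root x : connect (arcrel F) x (root x) := conn_iter _ _.
have weak_root a b : weakrel F a b -> root a = root b.
  case/orP => Hw.
    by move: (FP a b Hw) => /andP [_ /eqP ->]; rewrite root_f.
  by move: (FP b a Hw) => /andP [_ /eqP ->]; rewrite root_f.
have wcompE x : wcomp F x = [set y | root y == root x].
  apply/setP => y; rewrite !inE; apply/idP/idP.
    by move=> H; rewrite (connect_inv weak_root H).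
  move/eqP => Hr; have sw := sym_connect_sym (weakrel_sym F).
  have sub : subrel (arcrel F) (connect (weakrel F)).
    by move=> a b H; apply: connect1; apply/orP; left.
  have cx := connect_sub sub (conn_root x); have cy := connect_sub sub (conn_root y).
  by apply: (connect_trans cx); rewrite -Hr sw.
exists F; split.
  apply/andP; split.
    apply/forall_inP => a /imsetP [x]; rewrite inE => xT -> /=.
    by have /andP [] := nxtP x xT.
  apply/forallP => x; rewrite /converging_tree wcompE; apply/andP; split.
    apply/existsP; exists (root x); rewrite inE (rootTid _ (rootT x)) eqxx /=.
    by apply/forall_inP => y; rewrite inE => /eqP <-; exact: conn_root.
  set C := [set y | root y == root x].
  have rC : root x \in C by rewrite inE (rootTid _ (rootT x)).
  have -> : [set a in F | (a.1 \in C) && (a.2 \in C)] = [set (y, nxt y) | y in C :\ root x].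
    apply/setP => -[a b]; rewrite !inE /=; apply/idP/idP.
      case/andP => Hab /andP [aC bC]; have /andP [aT /eqP bf] := FP a b Hab.
      apply/imsetP; exists a.
        by rewrite !inE aC andbT; apply: contraNneq aT => ->; exact: rootT.
      by rewrite bf /f (negbTE aT).
    case/imsetP => y; rewrite !inE => /andP [yr yC] [-> ->].
    have yT : y \notin T.
      by apply: contra yr => yT; rewrite -{1}(rootTid _ yT).
    have -> : nxt y = f y by rewrite /f (negbTE yT).
    by rewrite root_f yC !andbT; exact: Fnx y yT.
  rewrite card_imset; last by move=> ? ? [].
  by rewrite (cardsD1 (root x) C) rC add1n subn1.
rewrite /ntrees.
have -> : [set wcomp F x | x : 'I_n] = [set wcomp F t | t in T].
  apply/setP => C; apply/imsetP/imsetP => [[x _ ->]|[t tT ->]].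
    by exists (root x); rewrite ?rootT // !wcompE (rootTid _ (rootT x)).
  by exists t.
rewrite card_in_imset // => t t' tT t'T; rewrite !wcompE => /setP /(_ t').
by rewrite !inE eqxx (rootTid _ tT) (rootTid _ t'T) => /eqP ->.
Qed.

Lemma inforest_dim_le e F : in_forest e F -> (inforest_dim e <= ntrees F)%N.
Proof. by move=> HF; apply: bigmin_le; rewrite ?mem_index_enum. Qed.

Lemma reach_dim_le e T : reach e T -> (inforest_dim e <= #|T|)%N.
Proof.
by move=> /reach_forest [F [HF <-]]; apply: inforest_dim_le.
Qed.

Lemma reach_dim_ge e : exists T, reach e T /\ (#|T| <= inforest_dim e)%N.
Proof.
have [H|[F HF H]] := bigmin_att (index_enum {set 'I_n * 'I_n}) (in_forest e) (@ntrees n) n.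
  exists setT; split; first by move=> x; exists x; rewrite ?inE ?connect0.
  by rewrite /inforest_dim H cardsT card_ord.
have [T [HT HTle]] := forest_reach HF.
by exists T; split => //; rewrite /inforest_dim H.
Qed.

End Graph.

Local Open Scope ring_scope.

Section Lap.
Variable R : realFieldType.
Variable n : nat.
Implicit Types (L : 'M[R]_n) (v : 'cV[R]_n) (S T : {set 'I_n}).

Definition lapl L := (forall i, \sum_j L i j = 0) /\ (forall i j, i != j -> L i j <= 0).
Definition closedS L S := forall i j, i \in S -> digraph_of L i j -> j \in S.

Lemma exists_max S (g : 'I_n -> R) i0 : i0 \in S ->
  exists2 i, i \in S & forall j, j \in S -> g j <= g i.
Proof.
move=> H; case: (@arg_maxP _ _ _ i0 (mem S) g H) => i Hi Hmax.
by exists i => // j /Hmax.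
Qed.

Lemma lap_row L v i : lapl L ->
  (L *m v) i 0 = \sum_(j | j != i) L i j * (v j 0 - v i 0).
Proof.
case=> Hs _; rewrite mxE.
have -> : \sum_j L i j * v j 0 = \sum_j L i j * (v j 0 - v i 0).
  under [RHS]eq_bigr do rewrite mulrBr.
  by rewrite sumrB -mulr_suml Hs mul0r subr0.
by rewrite (bigD1 i) //= subrr mulr0 add0r.
Qed.

Lemma max_terms L S v i : lapl L -> closedS L S -> i \in S ->
  (forall j, j \in S -> v j 0 <= v i 0) ->
  forall j, j != i -> 0 <= L i j * (v j 0 - v i 0).
Proof.
move=> HL HS iS Hmax j ji.
have [->|Lij] := eqVneq (L i j) 0; first by rewrite mul0r.
have jS : j \in S by apply: (HS i) => //; rewrite /digraph_of eq_sym ji Lij.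
by apply: mulr_le0; [apply: HL.2; rewrite eq_sym | rewrite subr_le0 Hmax].
Qed.

Lemma max_nonneg L S v i : lapl L -> closedS L S -> i \in S ->
  (forall j, j \in S -> v j 0 <= v i 0) -> 0 <= (L *m v) i 0.
Proof.
move=> HL HS iS Hmax; rewrite lap_row //; apply: sumr_ge0 => j ji.
exact: (max_terms HL HS iS Hmax).
Qed.

Lemma max_eq L S v i : lapl L -> closedS L S -> i \in S ->
  (forall j, j \in S -> v j 0 <= v i 0) -> (L *m v) i 0 <= 0 ->
  forall j, digraph_of L i j -> v j 0 = v i 0.
Proof.
move=> HL HS iS Hmax Hle j /andP [ij Lij].
have H0 : (L *m v) i 0 = 0 by apply/eqP; rewrite eq_le Hle (max_nonneg HL HS iS Hmax).
move: H0; rewrite lap_row // => /eqP; rewrite psumr_eq0; last first.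
  by move=> k ki; apply: (max_terms HL HS iS Hmax).
move/allP => /(_ j (mem_index_enum _)); rewrite eq_sym ij /= mulf_eq0 (negbTE Lij) /=.
by rewrite subr_eq0 => /eqP.
Qed.

Lemma max_prop L S v i : lapl L -> closedS L S -> i \in S ->
  (forall j, j \in S -> v j 0 <= v i 0) -> (forall j, j \in S -> (L *m v) j 0 <= 0) ->
  forall y, connect (digraph_of L) i y -> v y 0 = v i 0.
Proof.
move=> HL HS iS Hmax Hh y /connectP [p pp ->] {y}.
suff : forall x, x \in S -> v x 0 = v i 0 -> path (digraph_of L) x p ->
   (last x p \in S) && (v (last x p) 0 == v i 0).
  by move=> /(_ i iS erefl pp) /andP [_ /eqP].
elim: p {pp} => [|y p IH] x xS vx /=; first by rewrite xS vx eqxx.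
case/andP => exy py; apply: IH => //; first exact: (HS x).
have Hmx : forall j, j \in S -> v j 0 <= v x 0 by move=> j jS; rewrite vx Hmax.
by rewrite (max_eq HL HS xS Hmx (Hh x xS) exy).
Qed.

Lemma min_prop L S v i : lapl L -> closedS L S -> i \in S ->
  (forall j, j \in S -> v i 0 <= v j 0) -> (forall j, j \in S -> 0 <= (L *m v) j 0) ->
  forall y, connect (digraph_of L) i y -> v y 0 = v i 0.
Proof.
move=> HL HS iS Hmin Hh y Hy.
have H1 : forall j, j \in S -> (- v) j 0 <= (- v) i 0.
  by move=> j jS; rewrite !mxE lerN2 Hmin.
have H2 : forall j, j \in S -> (L *m - v) j 0 <= 0.
  by move=> j jS; rewrite mulmxN mxE oppr_le0 Hh.
have := @max_prop L S (- v) i HL HS iS H1 H2 y Hy; rewrite !mxE.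
by move/eqP; rewrite eqr_opp => /eqP.
Qed.

Lemma closedT L : closedS L setT.
Proof. by move=> i j _ _; rewrite inE. Qed.

Lemma harm_zero L v T : lapl L -> L *m v = 0 -> reach (digraph_of L) T ->
  (forall t, t \in T -> v t 0 = 0) -> v = 0.
Proof.
move=> HL Hv HT Hz; apply/matrixP => j k; rewrite (ord1 k) mxE.
have Hh0 : forall j, j \in setT -> (L *m v) j 0 <= 0 by move=> i _; rewrite Hv mxE.
have Hh1 : forall j, j \in setT -> 0 <= (L *m v) j 0 by move=> i _; rewrite Hv mxE.
have [i _ Hi] := @exists_max setT (fun i => v i 0) j (in_setT j).
have [t tT ct] := HT i.
have := max_prop HL (@closedT L) (in_setT i) Hi Hh0 ct; rewrite Hz // => Hi0.
have [i' _ Hi'] := @exists_max setT (fun i => - v i 0) j (in_setT j).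
have [t' t'T ct'] := HT i'.
have Hi'' : forall j, j \in setT -> v i' 0 <= v j 0.
  by move=> l lS; rewrite -lerN2 Hi'.
have := min_prop HL (@closedT L) (in_setT i') Hi'' Hh1 ct'; rewrite Hz // => Hi0'.
apply/eqP; rewrite eq_le; apply/andP; split.
  by rewrite Hi0 Hi ?inE.
by rewrite Hi0' Hi'' ?inE.
Qed.

End Lap.

Section Reach.
Variable n : nat.
Implicit Types (e : rel 'I_n) (T : {set 'I_n}).

Definition reachb e T := [forall x, [exists t in T, connect e x t]].
Lemma reachP e T : reflect (reach e T) (reachb e T).
Proof.
apply: (iffP forallP) => H x.
  by have /exists_inP [t tT ct] := H x; exists t.
by have [t tT ct] := H x; apply/exists_inP; exists t.
Qed.

Definition minreach e T := reach e T /\ forall T', reach e T' -> (#|T| <= #|T'|)%N.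

Lemma min_reach e : exists T, minreach e T.
Proof.
pose P k := [exists T, reachb e T && (#|T| == k)].
have Hk : exists k, P k.
  exists #|[set: 'I_n]|; apply/existsP; exists setT; rewrite eqxx andbT.
  by apply/reachP => x; exists x; rewrite ?inE ?connect0.
case: (ex_minnP Hk) => k /existsP [T /andP [rT /eqP Tk]] Hmin.
exists T; split; first exact/reachP.
move=> T' rT'; rewrite Tk; apply: Hmin; apply/existsP; exists T'.
by rewrite eqxx andbT; apply/reachP.
Qed.

Lemma minreach_m0 e T : minreach e T -> forall t t', t \in T -> t' \in T ->
  connect e t' t -> t' = t.
Proof.
move=> [HT Hmin] t t' tT t'T c; apply/eqP/negPn/negP => ne.
have : reach e (T :\ t').
  move=> x; have [u uT cu] := HT x; case: (eqVneq u t') => [eu|neu].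
    by subst u; exists t; [rewrite !inE eq_sym ne | exact: connect_trans cu c].
  by exists u; rewrite ?inE ?neu.
move/Hmin; by rewrite (cardsD1 t' T) t'T add1n ltnn.
Qed.

Lemma minreach_m2 e T t x : minreach e T -> t \in T -> connect e t x -> connect e x t.
Proof.
move=> HT tT ctx; have [u uT cu] := HT.1 x.
by rewrite (minreach_m0 HT uT tT (connect_trans ctx cu)).
Qed.

Lemma minreach_m3 e T t t' x : minreach e T -> t \in T -> t' \in T ->
  connect e t x -> connect e t' x -> t = t'.
Proof.
move=> HT tT t'T c1 c2.
by rewrite (minreach_m0 HT tT t'T (connect_trans c2 (minreach_m2 HT tT c1))).
Qed.
End Reach.

Section LapDim.
Variable R : realFieldType.
Variable n : nat.
Implicit Types (L : 'M[R]_n) (v : 'cV[R]_n) (S T C : {set 'I_n}).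

Lemma left_null L C c0 : lapl L -> closedS L C -> c0 \in C ->
  exists p : 'rV[R]_n,
    [&& p != 0, [forall j, (p 0 j != 0) ==> (j \in C)] & p *m L == 0].
Proof.
move=> HL HC c0C.
pose D := diag_mx (\row_j ((j \in C)%:R : R)).
pose N := \matrix_(i, j) (if (i \in C) && (j \in C) then L i j else 0 : R).
pose c := \col_j ((j \in C)%:R : R).
have Lout i j : i \in C -> j \notin C -> L i j = 0.
  move=> iC jC; have ij : i != j by apply: contraNneq jC => <-.
  apply/eqP/negPn/negP => Lij; case/negP: jC; apply: (HC i j iC).
  by rewrite /digraph_of Lij ij.
have Nc : N *m c = 0.
  apply/matrixP => i k; rewrite !mxE.
  case iC: (i \in C).
    rewrite -[RHS](HL.1 i); apply: eq_bigr => j _; rewrite !mxE /=.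
    rewrite iC /=; case jC: (j \in C); first by rewrite mulr1.
    by rewrite mul0r Lout ?iC ?jC.
  by rewrite big1 // => j _; rewrite !mxE iC /= mul0r.
have ND : N *m D = N.
  rewrite mul_mx_diag; apply/matrixP => i j; rewrite !mxE.
  by case: (j \in C); rewrite ?mulr1 ?mulr0 ?andbF.
have Dc : D *m c = c.
  rewrite mul_diag_mx; apply/matrixP => i j; rewrite !mxE.
  by case: (i \in C); rewrite ?mulr1 ?mul0r.
have cn0 : c != 0.
  by apply/eqP => /matrixP /(_ c0 0); rewrite !mxE c0C => /eqP; rewrite oner_eq0.
have NleD : (N <= D)%MS by rewrite -ND submxMl.
have nDN : ~~ (D <= N)%MS.
  apply/negP => /submxP [X HX].
  have : D *m c = 0 by rewrite HX -mulmxA Nc mulmx0.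
  by rewrite Dc; apply/eqP.
have rlt : (\rank N < \rank D)%N.
  have : (N < D)%MS by rewrite ltmxE NleD nDN.
  by rewrite ltmxErank => /andP [_ ->].
have notsub : ~~ (kermx N <= kermx D)%MS.
  apply/negP => /mxrankS; rewrite !mxrank_ker.
  have rD := rank_leq_row D.
  by rewrite leqNgt (ltn_sub2l (leq_trans rlt rD) rlt).
case/row_subPn: notsub => i Hi.
set u := row i (kermx N).
have uN : u *m N = 0 by apply/sub_kermxP; exact: row_sub.
have uD : u *m D != 0 by apply: contra Hi => /eqP H; apply/sub_kermxP.
exists (u *m D); rewrite uD /=; apply/andP; split.
  apply/forallP => j; apply/implyP; rewrite mul_mx_diag !mxE.
  by case: (j \in C) => //=; rewrite mulr0 eqxx.
apply/eqP/matrixP => a k; rewrite [RHS]mxE.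
have -> : (u *m D *m L) a k = (u *m N) a k.
  rewrite -mulmxA !mxE; apply: eq_bigr => j _; rewrite mul_diag_mx !mxE.
  case jC: (j \in C); case kC: (k \in C); rewrite /= ?mul1r ?mul0r //.
  by rewrite Lout ?kC.
by rewrite uN mxE.
Qed.

Lemma geom0_le L T : lapl L -> reach (digraph_of L) T -> (\rank (kermx L^T) <= #|T|)%N.
Proof.
move=> HL HT; set K := kermx L^T.
pose Sel : 'M[R]_(n, #|T|) := \matrix_(j, k) ((j == enum_val k)%:R).
have Hcap : (K :&: kermx Sel)%MS = 0.
  apply/eqP; rewrite -submx0; apply/row_subP => r; set u := row r _.
  have uK : (u <= K)%MS := submx_trans (row_sub r _) (capmxSl _ _).
  have uS : (u <= kermx Sel)%MS := submx_trans (row_sub r _) (capmxSr _ _).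
  have Hv : L *m u^T = 0.
    by apply: trmx_inj; rewrite trmx_mul trmxK trmx0; apply/sub_kermxP.
  suff -> : u = 0 by rewrite sub0mx.
  have uS0 := sub_kermxP uS.
  have H := harm_zero HL Hv HT.
  rewrite -[u]trmxK H ?trmx0 // => t tT.
  move/matrixP: uS0 => /(_ 0 (enum_rank_in tT t)) Hs.
  have Ht : (u *m Sel) 0 (enum_rank_in tT t) = u 0 t.
    rewrite [LHS]mxE (bigD1 t) //= big1 ?addr0.
      by rewrite [Sel _ _]mxE (enum_rankK_in tT tT) eqxx mulr1.
    by move=> j jt; rewrite [Sel _ _]mxE (enum_rankK_in tT tT) (negbTE jt) mulr0.
  transitivity (u 0 t); first by rewrite [LHS]mxE.
  by rewrite -Ht Hs mxE.
have := mxrank_mul_ker K Sel; rewrite Hcap mxrank0 addn0 => <-.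
exact: rank_leq_col.
Qed.

Lemma geom0_ge L T : lapl L -> minreach (digraph_of L) T -> (#|T| <= \rank (kermx L^T))%N.
Proof.
move=> HL HT; rewrite mxrank_ker mxrank_tr -mxrank_ker.
pose e := digraph_of L.
pose Rt t := [set x | connect e t x].
have Rcl t : closedS L (Rt t).
  by move=> x y; rewrite !inE => cx exy; apply: connect_trans cx (connect1 exy).
have tR t : t \in Rt t by rewrite inE connect0.
have ex t := @left_null L (Rt t) t HL (Rcl t) (tR t).
pose pv t := xchoose (ex t).
have pvP t := xchooseP (ex t).
have pv0 t : pv t != 0 by case/and3P: (pvP t).
have pvS t j : pv t 0 j != 0 -> j \in Rt t.
  by case/and3P: (pvP t) => _ /forallP /(_ j) /implyP.
have pvL t : pv t *m L = 0 by case/and3P: (pvP t) => _ _ /eqP.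
pose s t := odflt t [pick j | pv t 0 j != 0].
have sP t : pv t 0 (s t) != 0.
  rewrite /s; case: pickP => [j //|H0].
  by case/negP: (pv0 t); apply/eqP/matrixP => a j; rewrite (ord1 a) mxE; apply/eqP/negbFE/H0.
pose Q : 'M[R]_(#|T|, n) := \matrix_(k, j) pv (enum_val k) 0 j.
pose Z : 'M[R]_(n, #|T|) := \matrix_(j, k)
   (if j == s (enum_val k) then (pv (enum_val k) 0 j)^-1 else 0).
have QZ : Q *m Z = 1%:M.
  apply/matrixP => k k'; rewrite !mxE.
  rewrite (bigD1 (s (enum_val k'))) //= !mxE eqxx big1 ?addr0; last first.
    by move=> j /negbTE jn; rewrite !mxE jn mulr0.
  case: (eqVneq k k') => [<-|kk]; first by rewrite mulfV.
  suff -> : pv (enum_val k) 0 (s (enum_val k')) = 0 by rewrite mul0r.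
  apply/eqP/negPn/negP => Hne; case/negP: kk; apply/eqP/enum_val_inj.
  have h1 := pvS _ _ Hne; have h2 := pvS _ _ (sP (enum_val k')).
  rewrite !inE in h1 h2.
  exact: (minreach_m3 HT (enum_valP k) (enum_valP k') h1 h2).
have QK : (Q <= kermx L)%MS.
  apply/row_subP => k; apply/sub_kermxP.
  have -> : row k Q = pv (enum_val k) by apply/rowP => j; rewrite !mxE.
  exact: pvL.
apply: (leq_trans _ (mxrankS QK)).
by rewrite -{1}(mxrank1 R #|T|) -QZ mxrankM_maxl.
Qed.

Lemma lap_geom L : lapl L -> \rank (kermx L^T) = inforest_dim (digraph_of L).
Proof.
move=> HL; apply/eqP; rewrite eqn_leq; apply/andP; split.
  have [T [HT HTd]] := reach_dim_ge (digraph_of L).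
  exact: leq_trans (geom0_le HL HT) HTd.
have [T HT] := min_reach (digraph_of L).
exact: leq_trans (reach_dim_le HT.1) (geom0_ge HL HT).
Qed.

Lemma lap_ss L v : lapl L -> L *m (L *m v) = 0 -> L *m v = 0.
Proof.
move=> HL Hw; set w := L *m v in Hw *.
have [T HT] := min_reach (digraph_of L).
apply: (harm_zero HL Hw HT.1) => t tT.
pose S := [set x | connect (digraph_of L) t x].
have Scl : closedS L S.
  by move=> x y; rewrite !inE => cx exy; apply: connect_trans cx (connect1 exy).
have tS : t \in S by rewrite inE connect0.
have Sback x : x \in S -> connect (digraph_of L) x t.
  by rewrite inE => cx; apply: (minreach_m2 HT tT cx).
have Hh0 : forall j, j \in S -> (L *m w) j 0 <= 0 by move=> j _; rewrite Hw mxE.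
have Hh1 : forall j, j \in S -> 0 <= (L *m w) j 0 by move=> j _; rewrite Hw mxE.
have [a aS Ha] := @exists_max R n S (fun i => w i 0) t tS.
have wa := max_prop HL Scl aS Ha Hh0 (Sback a aS).
have [b bS Hb] := @exists_max R n S (fun i => - w i 0) t tS.
have Hb' : forall j, j \in S -> w b 0 <= w j 0 by move=> j jS; rewrite -lerN2 Hb.
have wb := min_prop HL Scl bS Hb' Hh1 (Sback b bS).
have [i iS Hi] := @exists_max R n S (fun i => v i 0) t tS.
have wi := max_nonneg HL Scl iS Hi.
have [i' i'S Hi'] := @exists_max R n S (fun i => - v i 0) t tS.
have Hi'' : forall j, j \in S -> (- v) j 0 <= (- v) i' 0.
  by move=> j jS; rewrite !mxE Hi'.
have wi' := max_nonneg HL Scl i'S Hi''.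
rewrite mulmxN mxE oppr_ge0 in wi'.
apply/eqP; rewrite eq_le; apply/andP; split.
  by rewrite wb (le_trans _ wi') // Hb'.
by rewrite wa (le_trans wi) // Ha.
Qed.

End LapDim.

Section LinAlg.
Variable F : fieldType.

Lemma char_poly_conj n (E f : 'M[F]_n) : E \in unitmx ->
  char_poly (E *m f *m invmx E) = char_poly f.
Proof.
move=> Eu; rewrite /char_poly.
have -> : char_poly_mx (E *m f *m invmx E) =
    map_mx polyC E *m char_poly_mx f *m map_mx polyC (invmx E).
  rewrite /char_poly_mx mulmxBr mulmxBl !map_mxM; congr (_ - _).
  by rewrite scalar_mxC -mulmxA -map_mxM mulmxV // map_mx1 mulmx1.
rewrite !det_mulmx mulrAC.
have -> : \det (map_mx polyC E) * \det (map_mx polyC (invmx E)) = 1.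
  by rewrite -det_mulmx -map_mxM mulmxV // map_mx1 det1.
by rewrite mul1r.
Qed.

Lemma char_poly_lblock k m (A : 'M[F]_k) C (B : 'M[F]_m) :
  char_poly (block_mx A 0 C B) = char_poly A * char_poly B.
Proof.
rewrite /char_poly /char_poly_mx map_block_mx map_mx0 (scalar_mx_block k m).
by rewrite opp_block_mx add_block_mx oppr0 !addr0 det_lblock.
Qed.

Lemma char_poly_scalar k (a : F) : char_poly (a%:M : 'M_k) = ('X - a%:P) ^+ k.
Proof.
rewrite /char_poly /char_poly_mx map_scalar_mx.
have -> : ('X%:M - (a%:P)%:M : 'M_k) = ('X - a%:P)%:M.
  by apply/matrixP => i j; rewrite !mxE mulrnBl.
by rewrite det_scalar.
Qed.

Lemma ebase_top k m p (U : 'M[F]_(p, k + m)) : \rank U = k ->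
  (usubmx (row_ebase U) == U)%MS.
Proof.
move=> rU; set E := row_ebase U.
have UE : (U <= usubmx E)%MS.
  rewrite -{1}(mulmx_ebase U) -mulmxA -[E in pid_mx _ *m E](vsubmxK E).
  rewrite -[pid_mx _](hsubmxK (pid_mx (\rank U) : 'M[F]_(p, k + m))) mul_row_col.
  have -> : rsubmx (pid_mx (\rank U) : 'M[F]_(p, k + m)) = 0.
    apply/matrixP => i j; rewrite !mxE rU.
    by case: eqP => //= -> ; rewrite ltnNge leq_addr.
  by rewrite mul0mx addr0 mulmxA submxMl.
have rE : \rank (usubmx E) = k.
  by apply/eqP; rewrite eqn_leq rank_leq_row -{1}rU mxrankS.
have [_ Heq] := mxrank_leqif_eq UE; rewrite rU rE eqxx in Heq.
have h : (U == usubmx E)%MS by rewrite -Heq.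
by case/andP: h => h1 h2; apply/andP.
Qed.

Lemma usubmxM m1 m2 n p (A : 'M[F]_(m1 + m2, n)) (B : 'M[F]_(n, p)) :
  usubmx (A *m B) = usubmx A *m B.
Proof. by rewrite -{1}(vsubmxK A) mul_col_mx col_mxKu. Qed.

Lemma conj_top k m (E f : 'M[F]_(k + m)) a : E \in unitmx ->
  usubmx E *m f = a *: usubmx E ->
  E *m f *m invmx E = block_mx a%:M 0 (dlsubmx (E *m f *m invmx E))
                                     (drsubmx (E *m f *m invmx E)).
Proof.
move=> Eu Hf; set M := E *m f *m invmx E.
have HU : usubmx M = row_mx a%:M 0.
  have -> : usubmx M = usubmx E *m f *m invmx E.
    by rewrite /M !usubmxM.
  rewrite Hf -scalemxAl.
  have -> : usubmx E *m invmx E = usubmx (E *m invmx E).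
    by rewrite usubmxM.
  rewrite mulmxV // (scalar_mx_block k m) block_mxEv col_mxKu.
  by rewrite scale_row_mx scalemx1 scaler0.
rewrite -{1}(submxK M); congr block_mx.
  by rewrite /ulsubmx HU row_mxKl.
by rewrite /ursubmx HU row_mxKr.
Qed.

End LinAlg.

Section LinAlg2.
Variable F : fieldType.

Lemma geom_le_alg n (f : 'M[F]_n) a :
  (\rank (kermx (f - a%:M)) <= mup a (char_poly f))%N.
Proof.
have [k Ek] : exists k, \rank (kermx (f - a%:M)) = k by eexists.
rewrite Ek; have Hk : (k <= n)%N by rewrite -Ek rank_leq_row.
move: (n - k)%N (subnKC Hk) => m e; subst n.
set U := kermx (f - a%:M) in Ek *.
have Uf : U *m f = a *: U.
  have /sub_kermxP := submx_refl U.
  by rewrite mulmxBr mul_mx_scalar => /eqP; rewrite subr_eq0 => /eqP.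
set E := row_ebase U; have Eu : E \in unitmx := row_ebase_unit U.
have top := ebase_top Ek.
have E1f : usubmx E *m f = a *: usubmx E.
  by case/andP: top => /submxP [X ->] _; rewrite -mulmxA Uf -scalemxAr.
rewrite mup_geq; last exact: monic_neq0 (char_poly_monic f).
rewrite -(char_poly_conj f Eu) (conj_top Eu E1f) char_poly_lblock char_poly_scalar.
exact: dvdp_mulr.
Qed.

Lemma alg_le_geom0 n (f : 'M[F]_n) :
  (forall u : 'rV[F]_n, u *m f *m f = 0 -> u *m f = 0) ->
  (mup 0 (char_poly f) <= \rank (kermx f))%N.
Proof.
move=> Hss.
have [k Ek] : exists k, \rank (kermx f) = k by eexists.
rewrite Ek; have Hk : (k <= n)%N by rewrite -Ek rank_leq_row.
move: (n - k)%N (subnKC Hk) => m e; subst n.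
set U := kermx f in Ek *.
have Uf : U *m f = 0 by apply/sub_kermxP.
set E := row_ebase U; have Eu : E \in unitmx := row_ebase_unit U.
have top := ebase_top Ek.
case/andP: (top) => h1 h2.
have E1f0 : usubmx E *m f = 0.
  by case/submxP: h1 => X ->; rewrite -mulmxA Uf mulmx0.
have E1f : usubmx E *m f = 0 *: usubmx E by rewrite E1f0 scale0r.
have HM := conj_top Eu E1f.
set C := dlsubmx _ in HM; set B := drsubmx _ in HM.
have rE1 : row_free (usubmx E).
  rewrite /row_free; apply/eqP/anti_leq.
  by rewrite rank_leq_row -{1}Ek mxrankS.
have Bu : B \in unitmx.
  rewrite -row_free_unit -kermx_eq0 -submx0; apply/row_subP => r; rewrite submx0.
  set y := row r (kermx B).
  have yB : y *m B = 0 by apply/sub_kermxP; exact: row_sub.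
  set z := row_mx (0 : 'rV[F]_k) y.
  have zM : z *m (E *m f *m invmx E) = row_mx (y *m C) 0.
    by rewrite HM mul_row_block !mul0mx !add0r yB.
  set v := z *m E.
  have e1 : v *m f = row_mx (y *m C) 0 *m E by rewrite -zM /v !mulmxA mulmxKV.
  have vf : v *m f = y *m C *m usubmx E.
    by rewrite e1 -{1}(vsubmxK E) mul_row_col mul0mx addr0.
  have vff : v *m f *m f = 0 by rewrite vf -mulmxA E1f0 mulmx0.
  have vf0 := Hss v vff.
  have yC0 : y *m C = 0.
    by apply: (row_free_inj rE1); rewrite mul0mx -vf vf0.
  have vU : (v <= U)%MS by apply/sub_kermxP.
  case/submxP: (submx_trans vU h2) => w ew.
  have : z *m E = row_mx w 0 *m E.
    by rewrite -/v ew -[in RHS](vsubmxK E) mul_row_col mul0mx addr0.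
  move/(row_free_inj (etrans (row_free_unit E) Eu)) => /eq_row_mx [_ ->].
  by rewrite eqxx.
rewrite -(char_poly_conj f Eu) HM char_poly_lblock char_poly_scalar.
rewrite mupM ?expf_neq0 ?polyXsubC_eq0 ?monic_neq0 ?char_poly_monic //.
rewrite mup_XsubCX eqxx mupNroot ?addn0 //.
rewrite /root horner_coef0 char_poly_det mulf_eq0 negb_or signr_eq0 /=.
by rewrite -unitfE -unitmxE.
Qed.

Lemma brauer m (f g : 'M[F]_(1 + m)) (u : 'rV[F]_(1 + m)) (c : 'cV[F]_(1 + m)) :
  u != 0 -> u *m f = 0 -> u *m g = u -> g = f + c *m u ->
  'X * char_poly g = ('X - 1) * char_poly f.
Proof.
move=> un0 uf ug gdef.
have rU : \rank u = 1%N by rewrite rank_rV un0.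
set E := row_ebase u; have Eu : E \in unitmx := row_ebase_unit u.
have top := ebase_top rU.
case/andP: top => /submxP [X eX] /submxP [Y eY].
have E1f : usubmx E *m f = 0 *: usubmx E by rewrite eX -mulmxA uf mulmx0 scale0r.
have E1g : usubmx E *m g = 1 *: usubmx E by rewrite eX -mulmxA ug scale1r.
have Hf := conj_top Eu E1f; have Hg := conj_top Eu E1g.
have uE : u *m invmx E = row_mx Y 0.
  rewrite eY -mulmxA -usubmxM mulmxV // (scalar_mx_block 1 m) block_mxEv col_mxKu.
  by rewrite mul_mx_row mulmx1 mulmx0.
have Bg : drsubmx (E *m g *m invmx E) = drsubmx (E *m f *m invmx E).
  rewrite gdef mulmxDr mulmxDl.
  have -> : E *m (c *m u) *m invmx E = row_mx (E *m c *m Y) 0.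
    by rewrite !mulmxA -(mulmxA _ u) uE mul_mx_row mulmx0.
  set W := E *m c *m Y.
  have -> : row_mx W 0 = block_mx (usubmx W) 0 (dsubmx W) 0 :> 'M_(1 + m).
    by rewrite block_mxEh !vsubmxK col_mx0.
  by rewrite Hf add_block_mx !block_mxKdr addr0.
rewrite -(char_poly_conj g Eu) -(char_poly_conj f Eu) [in LHS]Hg Bg [in RHS]Hf.
rewrite !char_poly_lblock !char_poly_scalar !expr1 polyC0 polyC1 subr0.
by rewrite mulrCA.
Qed.

Lemma dvd_comp1B (y : F) k p : ('X - y%:P) ^+ k %| p ->
  ('X - (1 - y)%:P) ^+ k %| (p \Po (1 - 'X)).
Proof.
case/dvdpP => r ->; rewrite comp_polyM rmorphXn /= comp_polyB comp_polyX comp_polyC.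
have -> : (1 - 'X) - y%:P = - ('X - (1 - y)%:P) by rewrite opprB polyCB polyC1 addrAC.
by rewrite exprNn; apply: dvdp_mull; apply: dvdp_mull; exact: dvdpp.
Qed.

Lemma mup_comp1B (p : {poly F}) x : p != 0 -> mup x (p \Po (1 - 'X)) = mup (1 - x) p.
Proof.
move=> p0.
have sq : (1 < size ((1 - 'X)%R : {poly F}))%N.
  by rewrite -opprB size_opp size_XsubC.
have pq0 : p \Po (1 - 'X) != 0 by rewrite comp_poly_eq0.
apply/eqP; rewrite eqn_leq; apply/andP; split.
  have : ('X - x%:P) ^+ mup x (p \Po (1 - 'X)) %| p \Po (1 - 'X) by rewrite -mup_geq.
  move/dvd_comp1B; rewrite -comp_polyA comp_polyB comp_polyC comp_polyX subKr comp_polyXr.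
  by rewrite -mup_geq.
have : ('X - (1 - x)%:P) ^+ mup (1 - x) p %| p by rewrite -mup_geq.
by move/dvd_comp1B; rewrite subKr -mup_geq.
Qed.

Lemma char_poly_1B n (A : 'M[F]_n) :
  char_poly (1%:M - A) = (-1) ^+ n * (char_poly A \Po (1 - 'X)).
Proof.
rewrite /char_poly -[_ \Po _](det_map_mx (comp_poly (1 - 'X))) -detZ scaleN1r.
congr (\det _); apply/matrixP => i j; rewrite !mxE.
rewrite [in RHS]rmorphB [in RHS]rmorphMn /= comp_polyX comp_polyC polyCB polyCMn.
case: (i == j) => /=; rewrite ?mulr1n ?mulr0n ?polyC0 ?polyC1.
  by rewrite !opprB addrA addrAC [in RHS]addrC.
by rewrite !sub0r opprK.
Qed.

End LinAlg2.

Section Final.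
Variable R : realFieldType.

Lemma char_poly_tr n (A : 'M[R]_n) : char_poly A^T = char_poly A.
Proof.
rewrite /char_poly -det_tr; congr (\det _).
by apply/matrixP => i j; rewrite !mxE eq_sym.
Qed.

Lemma sub0M n (A : 'M[R]_n) : A - 0%:M = A.
Proof. by apply/matrixP => i j; rewrite !mxE mul0rn subr0. Qed.

Lemma trB_scalar n (A : 'M[R]_n) a : (A - a%:M)^T = A^T - a%:M.
Proof. by apply/matrixP => i j; rewrite !mxE eq_sym. Qed.

Lemma geom_alg n (A : 'M[R]_n) a : (geom_mult A a <= alg_mult A a)%N.
Proof.
by rewrite /geom_mult /alg_mult /col_eigenspace trB_scalar -char_poly_tr geom_le_alg.
Qed.

Lemma lap_core n (L : 'M[R]_n) : lapl L ->
  geom_mult L 0 = inforest_dim (digraph_of L) /\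
  alg_mult L 0 = inforest_dim (digraph_of L).
Proof.
move=> HL; rewrite /geom_mult /alg_mult /col_eigenspace sub0M.
have Hg := lap_geom HL; split => //.
apply/eqP; rewrite eqn_leq; apply/andP; split.
  rewrite -char_poly_tr -Hg; apply: alg_le_geom0 => u Hu.
  apply: trmx_inj; rewrite trmx0 trmx_mul trmxK; apply: (lap_ss HL).
  by move/(congr1 trmx): Hu; rewrite !trmx_mul !trmxK trmx0.
by rewrite -Hg -char_poly_tr; have := geom_le_alg (L^T) 0; rewrite sub0M.
Qed.

Lemma std_lapl n (L : 'M[R]_n) : std_laplacian L -> lapl L.
Proof. by case=> H1 H2; split => // i j /H2 []. Qed.

Lemma nR0 n : (0 < n)%N -> (n%:R : R) != 0.
Proof. by move=> n0; rewrite pnatr_eq0 -lt0n. Qed.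

Lemma std_laplc n (L : 'M[R]_n) : (0 < n)%N -> std_laplacian L -> lapl (Kmx R n - L).
Proof.
move=> n0 [H1 H2]; split.
  move=> i; under eq_bigr do rewrite !mxE.
  rewrite sumrB H1 subr0 sumrB sumr_const card_ord.
  rewrite (bigD1 i) //= eqxx big1 ?addr0; last by move=> j /negbTE; rewrite eq_sym => ->.
  by rewrite -[_ *+ n]mulr_natr mulVf ?nR0 // subrr.
move=> i j ij; have [_ Hb] := H2 i j ij.
by rewrite !mxE (negbTE ij) mulr0n sub0r subr_le0 lerNl.
Qed.

Lemma digraph_c n (L : 'M[R]_n) : digraph_of (Kmx R n - L) = cdigraph_of L.
Proof.
do 2 apply: functional_extensionality => ?.
rewrite /digraph_of /cdigraph_of; case: eqP => //= ij.
by rewrite !mxE; move/eqP/negbTE: ij => ->; rewrite mulr0n sub0r subr_eq0 eq_sym.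
Qed.

Lemma LJ0 n (L : 'M[R]_n) : (forall i, \sum_j L i j = 0) -> L *m Jmx R n = 0.
Proof.
move=> H; apply/matrixP => i k; rewrite !mxE.
under eq_bigr do rewrite mxE.
by rewrite -mulr_suml H mul0r.
Qed.

Lemma JJ n : (0 < n)%N -> Jmx R n *m Jmx R n = Jmx R n.
Proof.
move=> n0; apply/matrixP => i k; rewrite !mxE.
under eq_bigr do rewrite !mxE.
by rewrite sumr_const card_ord -[_ *+ n]mulr_natr -mulrA mulVf ?nR0 // mulr1.
Qed.

Lemma geom_opp n (M : 'M[R]_n) : \rank (kermx (- M)^T) = \rank (kermx M^T).
Proof.
rewrite !mxrank_ker !mxrank_tr mxrank_opp //.
Qed.

Lemma kmap n (A B : 'M[R]_n) : (0 < n)%N ->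
  (forall V : 'M[R]_n, A *m V = 0 -> B *m (Kmx R n *m V) = 0) ->
  (\rank (kermx A^T) <= (\rank (kermx B^T)).+1)%N.
Proof.
move=> n0 H; set Ker := kermx A^T; set Kt := (Kmx R n)^T.
have KA : Ker *m A^T = 0 by apply/sub_kermxP.
have sub : (Ker *m Kt <= kermx B^T)%MS.
  apply/sub_kermxP; move: KA; clearbody Ker => KA.
  apply: trmx_inj; rewrite trmx0 !trmx_mul !trmxK.
  apply: H; apply: trmx_inj; rewrite trmx0 trmx_mul trmxK; exact: KA.
have capK : (\rank (Ker :&: kermx Kt) <= 1)%N.
  apply: leq_trans (mxrankS (capmxSr _ _)) _.
  suff : (kermx Kt <= (const_mx 1 : 'rV[R]_n))%MS.
    by move/mxrankS => h; exact: leq_trans h (rank_leq_row _).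
  apply/row_subP => r; set w := row r (kermx Kt).
  have wK : w *m Kt = 0 by apply/sub_kermxP; exact: row_sub.
  clearbody w.
  have -> : w = (\sum_j w 0 j * (n%:R)^-1) *: (const_mx 1 : 'rV[R]_n).
    apply/rowP => j; move/matrixP: wK => /(_ 0 j); rewrite !mxE.
    under eq_bigr do rewrite !mxE.
    under eq_bigr do rewrite mulrBr.
    rewrite sumrB (bigD1 j) //= eqxx /= mulr1n mulr1 big1 ?addr0; last first.
      by move=> i ij; rewrite eq_sym (negbTE ij) mulr0n mulr0.
    by move/eqP; rewrite subr_eq0 mulr1 => /eqP.
  by apply: scalemx_sub.
have := mxrank_mul_ker Ker Kt => <-.
by rewrite -addn1 leq_add // mxrankS.
Qed.

Lemma mupXC x c (q : {poly R}) : q != 0 ->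
  mup x (('X - c%:P) * q) = ((c == x) : nat) + mup x q.
Proof.
move=> q0; rewrite mupM ?polyXsubC_eq0 //.
by rewrite -['X - c%:P]expr1 mup_XsubCX; case: (c == x).
Qed.

Lemma brauer_L n (L : 'M[R]_n) : (0 < n)%N -> (forall i, \sum_j L i j = 0) ->
  'X * char_poly (L + Jmx R n) = ('X - 1) * char_poly L.
Proof.
case: n L => [//|m] L _ Hs.
rewrite -char_poly_tr -[char_poly L]char_poly_tr.
apply: (@brauer _ m (L^T) ((L + Jmx R m.+1)^T) (const_mx 1) (const_mx (m.+1%:R^-1))).
- by apply/eqP => /matrixP /(_ 0 0); rewrite !mxE => /eqP; rewrite oner_eq0.
- apply/matrixP => a j; rewrite !mxE.
  under eq_bigr do rewrite !mxE mul1r.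
  exact: Hs.
- apply/matrixP => a j; rewrite !mxE.
  under eq_bigr do rewrite !mxE mul1r.
  rewrite big_split /= Hs add0r sumr_const card_ord.
  by rewrite -[_ *+ _]mulr_natr mulVf ?nR0.
- by apply/matrixP => i j; rewrite !mxE big_ord1 !mxE mulr1.
Qed.

End Final.

Unset Implicit Arguments.

Theorem theorem7 (R : realFieldType) (n : nat) (L : 'M[R]_n) :
  (0 < n)%N -> std_laplacian L ->
  let P := L + Jmx R n in
  let Lc := Kmx R n - L in
  let d := inforest_dim (digraph_of L) in
  let dc := inforest_dim (cdigraph_of L) in
  [/\ (* (i) *) alg_mult L 0 = d /\ alg_mult L 1 = (dc - 1)%N,
      (* (ii) *) alg_mult P 0 = (d - 1)%N /\ alg_mult P 1 = dc,
      (* (iii) *) alg_mult Lc 1 = (d - 1)%N /\ alg_mult Lc 0 = dc,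
      (* semisimplicity: geometric multiplicity = algebraic multiplicity *)
      [/\ geom_mult L 0 = alg_mult L 0, geom_mult L 1 = alg_mult L 1,
          geom_mult P 0 = alg_mult P 0, geom_mult P 1 = alg_mult P 1 &
          geom_mult Lc 1 = alg_mult Lc 1 /\ geom_mult Lc 0 = alg_mult Lc 0] &
      (* (iv) *)
      [/\ forall v : 'cV[R]_n, in_eigsp P 0 v = in_eigsp Lc 1 v,
          forall v : 'cV[R]_n, in_eigsp P 1 v = in_eigsp Lc 0 v,
          forall v : 'cV[R]_n, in_eigsp L 0 v -> Kmx R n *m v != 0 ->
             in_eigsp P 0 (Kmx R n *m v) &
          forall x : 'cV[R]_n, in_eigsp P 1 x -> Kmx R n *m x != 0 ->
             in_eigsp L 1 (Kmx R n *m x)]].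
Proof.
move=> n0 HS P Lc d dc.
have HL := std_lapl HS.
have HLc : lapl Lc := std_laplc n0 HS.
have Hdc : inforest_dim (digraph_of Lc) = dc by rewrite /Lc digraph_c.
have [gL0 aL0] := lap_core HL.
have [gLc0 aLc0] := lap_core HLc.
rewrite Hdc in gLc0 aLc0; rewrite -/d in gL0 aL0.
have LJ := LJ0 HL.1.
have JJn := JJ R n0.
have LcP : Lc = 1%:M - P by rewrite /Lc /P /Kmx opprD addrA addrAC.
have PLc : P = 1%:M - Lc by rewrite LcP opprB addrC subrK.
have PK : P *m Kmx R n = L.
  by rewrite /P /Kmx mulmxDl !mulmxBr !mulmx1 LJ JJn subrr subr0 addr0.
have LK : L *m Kmx R n = L by rewrite /Kmx mulmxBr mulmx1 LJ subr0.
have L1K : (L - 1%:M) *m Kmx R n = P - 1%:M.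
  by rewrite mulmxBl LK mul1mx /Kmx opprB addrA.
have Hb : 'X * char_poly P = ('X - 1) * char_poly L := brauer_L n0 HL.1.
have cP0 : char_poly P != 0 := monic_neq0 (char_poly_monic P).
have cL0 : char_poly L != 0 := monic_neq0 (char_poly_monic L).
have cLc0 : char_poly Lc != 0 := monic_neq0 (char_poly_monic Lc).
have aP0L : (alg_mult P 0).+1 = alg_mult L 0.
  have := congr1 (mup 0) Hb.
  rewrite -[X in X * char_poly P](subr0 'X) -polyC0 -polyC1 !mupXC //.
  by rewrite eqxx oner_eq0.
have aP1L : alg_mult P 1 = (alg_mult L 1).+1.
  have := congr1 (mup 1) Hb.
  rewrite -[X in X * char_poly P](subr0 'X) -polyC0 -polyC1 !mupXC //.
  by rewrite eqxx eq_sym oner_eq0.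
have mref x : alg_mult P x = alg_mult Lc (1 - x).
  rewrite /alg_mult PLc char_poly_1B mupMr ?mup_comp1B //.
  by rewrite /root !hornerE expf_eq0 oppr_eq0 oner_eq0 andbF.
have aP0 : alg_mult P 0 = (d - 1)%N by rewrite -aL0 -aP0L subn1.
have aLc1 : alg_mult Lc 1 = (d - 1)%N by rewrite -aP0 mref subr0.
have aP1 : alg_mult P 1 = dc by rewrite mref subrr.
have aL1 : alg_mult L 1 = (dc - 1)%N by rewrite -aP1 aP1L subn1.
have gP1 : geom_mult P 1 = geom_mult Lc 0.
  rewrite /geom_mult /col_eigenspace sub0M.
  have -> : P - 1%:M = - Lc by rewrite LcP opprB.
  exact: geom_opp.
have gLc1 : geom_mult Lc 1 = geom_mult P 0.
  rewrite /geom_mult /col_eigenspace sub0M.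
  have -> : Lc - 1%:M = - P by rewrite LcP addrAC subrr add0r.
  exact: geom_opp.
have gP0 : geom_mult P 0 = alg_mult P 0.
  apply/eqP; rewrite eqn_leq geom_alg /=.
  have k1 : (geom_mult L 0 <= (geom_mult P 0).+1)%N.
    rewrite /geom_mult /col_eigenspace !sub0M; apply: kmap => // V HV.
    by rewrite mulmxA PK.
  by rewrite aP0 leq_subLR add1n -gL0.
have gL1 : geom_mult L 1 = alg_mult L 1.
  apply/eqP; rewrite eqn_leq geom_alg /=.
  have k2 : (geom_mult P 1 <= (geom_mult L 1).+1)%N.
    rewrite /geom_mult /col_eigenspace; apply: kmap => // V HV.
    by rewrite mulmxA L1K.
  by rewrite aL1 leq_subLR add1n -gLc0 -gP1.
split.
- by split.
- by split.
- by split.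
- split.
  + by rewrite gL0 aL0.
  + exact: gL1.
  + exact: gP0.
  + by rewrite gP1 gLc0 aP1.
  + split; first by rewrite gLc1 gP0 aP0 aLc1.
    by rewrite gLc0 aLc0.
- split.
  + move=> v; rewrite /in_eigsp LcP mulmxBl mul1mx scale0r scale1r.
    apply/eqP/eqP => H; first by rewrite H subr0.
    by move/eqP: H; rewrite -subr_eq0 addrAC subrr add0r oppr_eq0 => /eqP.
  + move=> v; rewrite /in_eigsp LcP mulmxBl mul1mx scale0r scale1r.
    by rewrite subr_eq0 eq_sym.
  + move=> v Lv _; rewrite /in_eigsp mulmxA PK scale0r.
    by move: Lv; rewrite /in_eigsp scale0r.
  + move=> x Px _; rewrite /in_eigsp mulmxA LK.
    move: Px; rewrite /in_eigsp !scale1r /P mulmxDl => /eqP Px.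
    by rewrite /Kmx mulmxBl mul1mx eq_sym subr_eq Px.
Qed.
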